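(* Let $(K,v)$ be an extremal valued field with value group $\Gamma$. Then for every nonzero convex subgroup $\Delta$ of $\Gamma$, the quotient $\Gamma/\Delta$ is divisible.
   Context: $(K,v)$ with valuation ring $\mathcal{O}_v$ and value group $\Gamma$ (and $v(0)=\infty$) is extremal if for every $n\ge1$ and every $F\in K[X_1,\dots,X_n]$ the set $\{v(F(a_1,\dots,a_n)) : a_i\in\mathcal{O}_v\}\subseteq\Gamma\cup\{\infty\}$ has a maximal element. *)

(* Defs.v *)
From HB Require Import structures.
From mathcomp Require Import all_boot all_order all_algebra.
Set Implicit Arguments. Unset Strict Implicit. Unset Printing Implicit Defensive.
Import GRing.Theory.
Local Open Scope ring_scope.

Definition ordered_abgroup (G : zmodType) (le : rel G) : Prop :=
  [/\ (forall x, le x x),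
      (forall x y z, le x y -> le y z -> le x z),
      (forall x y, le x y -> le y x -> x = y),
      (forall x y, le x y \/ le y x) &
      (forall x y z, le x y -> le (x + z) (y + z))].

(* order on Gamma u {oo}, with None standing for oo (the top element) *)
Definition le_inf (G : Type) (le : rel G) (a b : option G) : Prop :=
  match a, b with
  | _, None => True
  | None, Some _ => False
  | Some x, Some y => le x y
  end.

Definition add_inf (G : zmodType) (a b : option G) : option G :=
  match a, b with
  | Some x, Some y => Some (x + y)
  | _, _ => None
  end.

Definition valuation (K : fieldType) (G : zmodType) (le : rel G)
    (v : K -> option G) : Prop :=
  [/\ (forall x, v x = None <-> x = 0),
      (forall x y, v (x * y) = add_inf (v x) (v y)),
      (forall x y, le_inf le (v x) (v (x + y)) \/ le_inf le (v y) (v (x + y))) &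
      (forall g, exists x, v x = Some g)].

Definition in_val_ring (K : fieldType) (G : zmodType) (le : rel G)
    (v : K -> option G) (x : K) : Prop := le_inf le (Some 0) (v x).

Inductive mpoly (K : Type) (n : nat) : Type :=
| MConst of K
| MVar of 'I_n
| MAdd of mpoly K n & mpoly K n
| MMul of mpoly K n & mpoly K n.

Fixpoint meval (K : fieldType) (n : nat) (F : mpoly K n) (a : 'I_n -> K) : K :=
  match F with
  | MConst c => c
  | MVar i => a i
  | MAdd F1 F2 => meval F1 a + meval F2 a
  | MMul F1 F2 => meval F1 a * meval F2 a
  end.

Definition extremal (K : fieldType) (G : zmodType) (le : rel G)
    (v : K -> option G) : Prop :=
  forall (n : nat), (1 <= n)%N -> forall F : mpoly K n,
    exists a : 'I_n -> K, (forall i, in_val_ring le v (a i)) /\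
      forall b : 'I_n -> K, (forall i, in_val_ring le v (b i)) ->
        le_inf le (v (meval F b)) (v (meval F a)).

Definition convex_subgroup (G : zmodType) (le : rel G) (D : G -> Prop) : Prop :=
  [/\ D 0,
      (forall x y, D x -> D y -> D (x - y)) &
      (forall x y z, D x -> D z -> le x y -> le y z -> D y)].

Definition quotient_divisible (G : zmodType) (D : G -> Prop) : Prop :=
  forall (n : nat) (g : G), (1 <= n)%N -> exists h : G, D (h *+ n - g).

(* Main.v *)
Require Import Defs.
From mathcomp Require Import all_boot all_order all_algebra.
From Stdlib Require Import Classical.
Import GRing.Theory.
Local Open Scope ring_scope.
Set Implicit Arguments. Unset Strict Implicit.

Section Ord.
Variable G : zmodType.
Variable le : rel G.
Hypothesis Hord : ordered_abgroup le.

Let lt (x y : G) := ~~ le y x.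

Lemma gle_refl x : le x x. Proof. by case: Hord. Qed.
Lemma gle_trans x y z : le x y -> le y z -> le x z. Proof. by case: Hord => _ H _ _ _; apply: H. Qed.
Lemma gle_anti x y : le x y -> le y x -> x = y. Proof. by case: Hord => _ _ H _ _; apply: H. Qed.
Lemma gle_total x y : le x y \/ le y x. Proof. by case: Hord. Qed.
Lemma gleD2r x y z : le x y -> le (x + z) (y + z). Proof. by case: Hord => _ _ _ _ H; apply: H. Qed.
Lemma gleD2rE x y z : le (x + z) (y + z) = le x y.
Proof.
apply/idP/idP; last exact: gleD2r.
by move/(gleD2r (- z)); rewrite !addrK.
Qed.
Lemma gleD2lE x y z : le (z + x) (z + y) = le x y.
Proof. by rewrite ![z + _]addrC gleD2rE. Qed.
Lemma gltW x y : lt x y -> le x y.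
Proof. rewrite /lt => /negP H; case: (gle_total x y) => // /H. Qed.
Lemma glt_neq x y : lt x y -> x <> y.
Proof. by rewrite /lt => H E; subst; rewrite gle_refl in H. Qed.
Lemma gle_lt_trans x y z : le x y -> lt y z -> lt x z.
Proof. by rewrite /lt => H1 /negP H2; apply/negP => H3; apply: H2; apply: gle_trans H3 H1. Qed.
Lemma glt_le_trans x y z : lt x y -> le y z -> lt x z.
Proof. by rewrite /lt => /negP H1 H2; apply/negP => H3; apply: H1; apply: gle_trans H2 H3. Qed.
Lemma glt_trans x y z : lt x y -> lt y z -> lt x z.
Proof. by move=> H1 H2; apply: gle_lt_trans (gltW H1) H2. Qed.
Lemma gltD2rE x y z : lt (x + z) (y + z) = lt x y.
Proof. by rewrite /lt gleD2rE. Qed.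
Lemma gltD2lE x y z : lt (z + x) (z + y) = lt x y.
Proof. by rewrite /lt gleD2lE. Qed.
Lemma glt_sub x y : lt x y = lt 0 (y - x).
Proof. by rewrite -(gltD2rE x y (-x)) subrr. Qed.
Lemma gle_sub x y : le x y = le 0 (y - x).
Proof. by rewrite -(gleD2rE x y (-x)) subrr. Qed.
Lemma gle_add0 x y : le 0 x -> le 0 y -> le 0 (x + y).
Proof. move=> Hx Hy; apply: gle_trans Hx _; by rewrite -{1}(addr0 x) gleD2lE. Qed.
Lemma glt_add0 x y : lt 0 x -> le 0 y -> lt 0 (x + y).
Proof. move=> Hx Hy; apply: glt_le_trans Hx _; by rewrite -{1}(addr0 x) gleD2lE. Qed.
Lemma gle_muln0 x n : le 0 x -> le 0 (x *+ n).
Proof. move=> Hx; elim: n => [|n IH]; first by rewrite mulr0n gle_refl. by rewrite mulrS gle_add0. Qed.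
Lemma glt_muln0 x n : lt 0 x -> (0 < n)%N -> lt 0 (x *+ n).
Proof. move=> Hx; case: n => // n _; by rewrite mulrS glt_add0 // gle_muln0 // gltW. Qed.
Lemma gle_muln x y n : le x y -> le (x *+ n) (y *+ n).
Proof. by rewrite gle_sub (gle_sub (x *+ n)) -mulrnBl; apply: gle_muln0. Qed.
Lemma glt_muln x y n : lt x y -> (0 < n)%N -> lt (x *+ n) (y *+ n).
Proof. by rewrite glt_sub (glt_sub (x *+ n)) -mulrnBl; apply: glt_muln0. Qed.
Lemma glt_muln_inv x y n : lt (x *+ n) (y *+ n) -> lt x y.
Proof. rewrite /lt => /negP H; apply/negP => H'; apply: H; exact: gle_muln. Qed.
Lemma gle_opp x y : le x y -> le (- y) (- x).
Proof. by rewrite gle_sub (gle_sub (-y)) opprK addrC. Qed.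
Lemma glt0_total x : x <> 0 -> lt 0 x \/ lt 0 (- x).
Proof.
move=> Hx; rewrite /lt; case: (gle_total x 0) => H.
  right; apply/negP => H2; apply: Hx; apply: gle_anti H _.
  by move/gle_opp: H2; rewrite opprK oppr0.
left; apply/negP => H2; apply: Hx; exact: gle_anti H2 H.
Qed.
Lemma gdouble0 (x : G) : x + x = 0 -> x = 0.
Proof.
move=> H; case: (gle_total 0 x) => Hx.
  apply: (gle_anti _ Hx). rewrite -H. rewrite -{1}(addr0 x). rewrite gleD2lE. by [].
apply: (gle_anti Hx). rewrite -H. rewrite -{3}(addr0 x). rewrite gleD2lE. by [].
Qed.
End Ord.


Section Val.
Variable K : fieldType.
Variable G : zmodType.
Variable le : rel G.
Variable v : K -> option G.
Hypothesis Hord : ordered_abgroup le.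
Hypothesis Hval : valuation le v.

Let L := le_inf le.
Definition ltinf (a b : option G) := ~ le_inf le b a.

Lemma linf_refl a : L a a.
Proof. by case: a => //= x; apply: (gle_refl Hord). Qed.
Lemma linf_trans a b c : L a b -> L b c -> L a c.
Proof. by case: a; case: b; case: c => //= x y z; apply: (gle_trans Hord). Qed.
Lemma linf_anti a b : L a b -> L b a -> a = b.
Proof. by case: a; case: b => //= x y H1 H2; rewrite (gle_anti Hord H2 H1). Qed.
Lemma linf_total a b : L a b \/ L b a.
Proof. case: a; case: b => /=; try (by left); try (by right). move=> x y; apply: (gle_total Hord). Qed.
Lemma ltinf_le a b : ltinf a b -> L a b.
Proof. by rewrite /ltinf => H; case: (linf_total a b) => // /H. Qed.
Lemma le_ltinf a b c : L a b -> ltinf b c -> ltinf a c.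
Proof. by rewrite /ltinf => H1 H2 H3; apply: H2; apply: linf_trans H3 H1. Qed.
Lemma ltinf_le_trans a b c : ltinf a b -> L b c -> ltinf a c.
Proof. by rewrite /ltinf => H1 H2 H3; apply: H1; apply: linf_trans H2 H3. Qed.
Lemma ltinf_SS x y : ltinf (Some x) (Some y) <-> ~~ le y x.
Proof. by rewrite /ltinf /=; split => [/negP|/negP]. Qed.
Lemma ltinf_SN x : ltinf (Some x) None.
Proof. by []. Qed.
Lemma linf_SS x y : L (Some x) (Some y) <-> le x y.
Proof. by []. Qed.

Lemma v0 : v 0 = None. Proof. by case: Hval => H _ _ _; apply/(proj2 (H _)). Qed.
Lemma vNone x : v x = None -> x = 0. Proof. by case: Hval => H _ _ _; apply/(proj1 (H _)). Qed.
Lemma vnz x : x != 0 -> exists a, v x = Some a.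
Proof. move=> /eqP Hx; case E: (v x) => [a|]; first by exists a. by case: Hx; apply: vNone. Qed.
Lemma vM x y : v (x * y) = add_inf (v x) (v y). Proof. by case: Hval => _ H _ _. Qed.
Lemma vult x y : L (v x) (v (x + y)) \/ L (v y) (v (x + y)). Proof. by case: Hval => _ _ H _. Qed.
Lemma vsurj g : exists x, v x = Some g. Proof. by case: Hval => _ _ _ H. Qed.

Lemma v1 : v 1 = Some 0.
Proof.
have := vM 1 1; rewrite mulr1.
case E: (v 1) => [a|] /=; last by move/vNone: E => /eqP; rewrite oner_eq0.
by case => /(congr1 (fun z => z - a)); rewrite addrK subrr => <-.
Qed.
Lemma vN1 : v (-1) = Some 0.
Proof.
have := vM (-1) (-1); rewrite mulrNN mulr1 v1.
case E: (v (-1)) => [a|] //=; case => H; by rewrite (gdouble0 Hord (esym H)).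
Qed.
Lemma vN x : v (- x) = v x.
Proof. by rewrite -mulN1r vM vN1; case: (v x) => //= a; rewrite add0r. Qed.
Lemma vexp x a n : v x = Some a -> v (x ^+ n) = Some (a *+ n).
Proof.
move=> Hx; elim: n => [|n IH]; first by rewrite expr0 mulr0n v1.
by rewrite exprS vM Hx IH /= mulrS.
Qed.
Lemma vdiv x y a b : x != 0 -> v x = Some a -> v y = Some b -> v (y / x) = Some (b - a).
Proof.
move=> Hx Ha Hb.
have E : y = x * (y / x) by rewrite mulrC divfK.
have := vM x (y / x); rewrite -E Hb Ha.
case: (v (y / x)) => //= c [->]; by rewrite [a + c]addrC addrK.
Qed.

Lemma ultra x y : ltinf (v x) (v y) -> v (x + y) = v x.
Proof.
move=> H.
have H1 : L (v x) (v (x + y)).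
  case: (vult x y) => // H2; apply: ltinf_le; exact: ltinf_le_trans H H2.
apply: linf_anti => //.
have := vult (x + y) (- y); rewrite addrK vN; case => // H2.
Qed.
Lemma ultra_r x y : ltinf (v y) (v x) -> v (x + y) = v y.
Proof. by rewrite addrC; apply: ultra. Qed.
Lemma ultra_lt c x y : ltinf c (v x) -> ltinf c (v y) -> ltinf c (v (x + y)).
Proof. move=> H1 H2; case: (vult x y) => H; [exact: ltinf_le_trans H1 H | exact: ltinf_le_trans H2 H]. Qed.
End Val.


Section GroupFacts.
Variable G : zmodType.
Variable le : rel G.
Hypothesis Hord : ordered_abgroup le.
Variable D : G -> Prop.
Hypothesis HD : convex_subgroup le D.
Local Notation LT x y := (~~ le y x).

Lemma D0 : D 0. Proof. by case: HD. Qed.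
Lemma DB x y : D x -> D y -> D (x - y). Proof. by case: HD => _ H _; apply: H. Qed.
Lemma DN x : D x -> D (- x). Proof. by move=> Hx; rewrite -sub0r; apply: DB => //; apply: D0. Qed.
Lemma DD x y : D x -> D y -> D (x + y).
Proof. by move=> Hx Hy; rewrite -(opprK y); apply: DB => //; apply: DN. Qed.
Lemma Dmul x n : D x -> D (x *+ n).
Proof. move=> Hx; elim: n => [|n IH]; first by rewrite mulr0n; apply: D0. by rewrite mulrS; apply: DD. Qed.
Lemma Dconv x y : le 0 x -> le x y -> D y -> D x.
Proof. by case: HD => _ _ H H1 H2 H3; apply: (H 0 x y) => //; apply: D0. Qed.
Lemma conv_lt x y : LT 0 x -> ~ D x -> le 0 y -> D y -> LT y x.
Proof.
move=> H0 Hx Hy0 Hy; apply/negP => H; apply: Hx; apply: (Dconv (gltW Hord H0) H Hy).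
Qed.
End GroupFacts.


Section Ineq.
Variable G : zmodType.
Variable le : rel G.
Hypothesis Hord : ordered_abgroup le.
Variable D : G -> Prop.
Hypothesis HD : convex_subgroup le D.
Variables (n : nat) (g d : G).
Hypothesis Hn : (1 < n)%N.
Hypothesis Hg : ~~ le g 0.
Hypothesis Hnd : forall h, ~ D (h *+ n - g).
Hypothesis Hd0 : ~~ le d 0.
Hypothesis Hd : D d.
Local Notation LT x y := (~~ le y x).
Local Notation N x := (x *+ n).

Definition uu := N g - g.
Definition tau := - N g - uu.
Definition kap := g - uu.

Lemma n0 : (0 < n)%N. Proof. by apply: ltn_trans Hn. Qed.

Lemma lt_shift x y z : LT x y -> LT (x + z) (y + z).
Proof. by rewrite (gltD2rE Hord). Qed.
Lemma lt_shiftl x y z : LT x y -> LT (z + x) (z + y).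
Proof. by rewrite (gltD2lE Hord). Qed.

Lemma lt_addr x y : LT 0 y -> LT x (x + y).
Proof. by move=> H; have := lt_shiftl x H; rewrite addr0. Qed.
Lemma le_addr x y : le 0 y -> le x (x + y).
Proof. by move=> H; rewrite -{1}(addr0 x) (gleD2lE Hord). Qed.
Lemma lt_subr x y : LT 0 y -> LT (x - y) x.
Proof. by move=> H; rewrite (glt_sub Hord) opprB addrCA subrr addr0. Qed.

Lemma lt_addneg x y : LT y 0 -> LT (x + y) x.
Proof. by move=> H; have := lt_shiftl x H; rewrite addr0. Qed.

Lemma u_pos : LT 0 uu.
Proof.
rewrite /uu -(glt_sub Hord); move: Hn; case: n => [|[|m]] // _.
rewrite mulrS; apply: lt_addr; apply: (glt_muln0 Hord) => //.
Qed.
Lemma T1 : tau + N g = - uu.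
Proof. by rewrite /tau addrAC addNr add0r. Qed.
Lemma T2 : LT (- uu) 0.
Proof. by rewrite (glt_sub Hord) sub0r opprK u_pos. Qed.
Lemma T3 : LT (- uu) kap.
Proof. by have := lt_shift (- uu) Hg; rewrite add0r. Qed.
Lemma lt_g x : LT x g -> LT (tau + N x) (- uu).
Proof. move=> H; rewrite -T1; apply: lt_shiftl; exact: (glt_muln Hord H n0). Qed.

Lemma A1 a b : le 0 a -> le 0 b -> LT (a + b) g -> LT (tau + N (a + b)) (N a).
Proof.
move=> Ha Hb H; rewrite mulrnDl addrCA; apply: lt_addneg.
have Hbg : LT b g.
  apply: (gle_lt_trans Hord) H; by rewrite -{1}(add0r b) (gleD2rE Hord).
exact: (glt_trans Hord (lt_g Hbg) T2).
Qed.
Lemma A2 a b : le 0 a -> le 0 b -> LT (a + b) g -> LT (tau + N (a + b)) (kap + N b).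
Proof.
move=> Ha Hb H; rewrite mulrnDl addrA; apply: lt_shift.
have Hag : LT a g.
  apply: (gle_lt_trans Hord) H; by rewrite -{1}(addr0 a) (gleD2lE Hord).
exact: (glt_trans Hord (lt_g Hag) T3).
Qed.
Lemma A3 a : LT a g -> LT (tau + N a) 0.
Proof. by move=> H; exact: (glt_trans Hord (lt_g H) T2). Qed.
Lemma B1 a : le 0 a -> LT (- uu) (N a).
Proof. move=> Ha; apply: (glt_le_trans Hord T2); exact: (gle_muln0 Hord). Qed.
Lemma B2 b : le 0 b -> LT (- uu) (kap + N b).
Proof.
move=> Hb; apply: (glt_le_trans Hord T3); rewrite -{1}(addr0 kap) (gleD2lE Hord).
exact: (gle_muln0 Hord).
Qed.

Lemma E1 a : kap + N (g - a) = g + (g - N a).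
Proof. rewrite /kap /uu mulrnBl opprB -addrA; congr (_ + _); by rewrite addrA subrK. Qed.
Lemma P1 a : LT (N a) g -> LT (N a) (kap + N (g - a)).
Proof.
move=> H; rewrite E1; apply: (glt_trans Hord H).
by apply: lt_addr; rewrite -(glt_sub Hord).
Qed.
Lemma P2 a : LT g (N a) -> LT (kap + N (g - a)) (N a).
Proof.
move=> H; rewrite E1; apply: (glt_trans Hord _ H).
by apply: lt_addneg; rewrite (glt_sub Hord) sub0r opprB -(glt_sub Hord).
Qed.

Lemma tau_eq : tau = g - N (g + g).
Proof. by rewrite /tau /uu mulrnDl opprB opprD addrCA. Qed.

Lemma C1 w a : tau + N w <> N a.
Proof.
rewrite tau_eq => E; case: (@Hnd (a - w + (g + g))).
have E2 : N a - N w + N (g + g) = g by rewrite -E addrK subrK.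
by rewrite mulrnDl mulrnBl E2 subrr; apply: (D0 HD).
Qed.
Lemma C2 w a : tau + N w <> kap + N (g - a).
Proof.
rewrite tau_eq E1 -addrA => /addrI E; case: (@Hnd (- (g + g) + w + a)).
have E2 : - N (g + g) + N w + N a = g by rewrite E subrK.
by rewrite !mulrnDl mulNrn E2 subrr; apply: (D0 HD).
Qed.
Lemma Nd_pos : le 0 (N d). Proof. exact: (gle_muln0 Hord n (gltW Hord Hd0)). Qed.
Lemma DNd : D (N d). Proof. exact: (Dmul HD n Hd). Qed.

Lemma I1 a : le 0 a -> LT (N a) g ->
  [/\ le 0 (a + d), LT (a + d) g, LT (N (a + d)) g & LT (N a) (N (a + d))].
Proof.
move=> Ha H.
have Hnd' : ~ D (g - N a) by move=> H1; apply: (@Hnd a); rewrite -opprB; apply: (DN HD).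
have Hlt : LT (N d) (g - N a).
  apply: (conv_lt Hord HD) => //; [by rewrite -(glt_sub Hord) | exact: Nd_pos | exact: DNd].
have H1 : LT (N (a + d)) g.
  have := lt_shiftl (N a) Hlt; by rewrite addrCA subrr addr0 -mulrnDl.
split => //.
- apply: (gle_trans Hord Ha); apply: le_addr; exact: (gltW Hord Hd0).
- apply: (glt_muln_inv Hord (n := n)); apply: (glt_le_trans Hord H1).
  rewrite (gle_sub Hord); exact: (gltW Hord u_pos).
- apply: (glt_muln Hord) => //; last exact: n0. exact: lt_addr.
Qed.

Lemma I2 a : LT g (N a) ->
  [/\ LT 0 (a - d), le (a - d) a, LT g (N (a - d)) &
      LT (kap + N (g - a)) (kap + N (g - (a - d)))].
Proof.
move=> H.
have Hlt : LT (N d) (N a - g).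
  apply: (conv_lt Hord HD) => //; [by rewrite -(glt_sub Hord) | exact: Nd_pos | exact: DNd].
have H1 : LT g (N (a - d)).
  by rewrite mulrnBl (glt_sub Hord) addrAC -(glt_sub Hord).
split => //.
- apply: (glt_muln_inv Hord (n := n)); rewrite mul0rn; exact: (glt_trans Hord Hg H1).
- exact: (gltW Hord (lt_subr a Hd0)).
- apply: lt_shiftl; apply: (glt_muln Hord) => //; last exact: n0.
  by rewrite opprB addrCA addrC; apply: lt_addr.
Qed.

Variable K : fieldType.
Variable v : K -> option G.
Hypothesis Hval : valuation le v.
Variables (s c2 c3 t : K).
Hypothesis Hs : v s = Some g.
Hypothesis Hc2 : v c2 = Some kap.
Hypothesis Hc3 : v c3 = Some tau.
Hypothesis Ht : v t = Some d.
Local Notation O x := (in_val_ring le v x).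
Local Notation Li := (le_inf le).
Local Notation lti := (ltinf le).

Definition Pv (x y : K) := x ^+ n + c2 * y ^+ n + c3 * (x * y + - s) ^+ n.

Lemma exp0n : (0 : K) ^+ n = 0.
Proof. by rewrite expr0n eqn0Ngt n0. Qed.

Lemma trich p q : lti p q \/ p = q \/ lti q p.
Proof.
case: (classic (Li q p)) => H; last by left.
case: (classic (Li p q)) => H2; last by right; right.
by right; left; apply: (linf_anti Hord).
Qed.

Lemma three x y z : lti (v z) (v x) -> lti (v z) (v y) -> v (x + y + z) = v z.
Proof. move=> H1 H2; apply: (ultra_r Hord Hval); exact: (ultra_lt Hord Hval). Qed.

Lemma le_two x y : v y <> v x -> Li (v (x + y)) (v x).
Proof.
move=> Hne; case: (trich (v x) (v y)) => [H|[H|H]].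
- by rewrite (ultra Hord Hval H); apply: linf_refl.
- by case: Hne.
- by rewrite (ultra_r Hord Hval H); apply: ltinf_le.
Qed.

Lemma ltU1 x : O x -> lti (Some (- uu)) (v (x ^+ n)).
Proof.
move=> Hx; case: (eqVneq x 0) => [->|nz]; first by rewrite exp0n (v0 Hval).
case: (vnz Hval nz) => a Ha; rewrite (vexp Hval n Ha); apply/ltinf_SS.
apply: B1; by move: Hx; rewrite /in_val_ring Ha.
Qed.
Lemma ltU2 y : O y -> lti (Some (- uu)) (v (c2 * y ^+ n)).
Proof.
move=> Hy; case: (eqVneq y 0) => [->|nz]; first by rewrite exp0n mulr0 (v0 Hval).
case: (vnz Hval nz) => b Hb; rewrite (vM Hval) Hc2 (vexp Hval n Hb) /=; apply/ltinf_SS.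
apply: B2; by move: Hy; rewrite /in_val_ring Hb.
Qed.
Lemma vt3ne e r : (forall w, tau + N w <> r) -> v (c3 * e ^+ n) <> Some r.
Proof.
move=> H; case: (eqVneq e 0) => [->|nz]; first by rewrite exp0n mulr0 (v0 Hval).
case: (vnz Hval nz) => w Hw; rewrite (vM Hval) Hc3 (vexp Hval n Hw) /=.
by case => /H.
Qed.

Lemma pt x a : x != 0 -> v x = Some a -> le 0 a -> le a g ->
  [/\ O x, O (s / x),
      (LT (N a) g -> v (Pv x (s / x)) = Some (N a)) &
      (LT g (N a) -> v (Pv x (s / x)) = Some (kap + N (g - a)))].
Proof.
move=> nz Ha Ha0 Hag.
have E : Pv x (s / x) = x ^+ n + c2 * (s / x) ^+ n.
  by rewrite /Pv [x * _]mulrC divfK // subrr exp0n mulr0 addr0.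
have Hsx : v (s / x) = Some (g - a) by apply: (vdiv Hval nz Ha Hs).
have V1 : v (x ^+ n) = Some (N a) by exact: (vexp Hval n Ha).
have V2 : v (c2 * (s / x) ^+ n) = Some (kap + N (g - a)).
  by rewrite (vM Hval) Hc2 (vexp Hval n Hsx).
split.
- by rewrite /in_val_ring Ha.
- by rewrite /in_val_ring Hsx /= -(gle_sub Hord).
- move=> H; rewrite E (ultra Hord Hval) // V1 V2; apply/ltinf_SS; exact: P1.
- move=> H; rewrite E (ultra_r Hord Hval) // V1 V2; apply/ltinf_SS; exact: P2.
Qed.

Lemma no_max a b : O a -> O b ->
  exists a' b', [/\ O a', O b' & lti (v (Pv a b)) (v (Pv a' b'))].
Proof.
move=> Ha Hb.
have Hsneg : v (- s) = Some g by rewrite (vN Hord Hval) Hs.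
have tnz : t != 0 by apply/eqP => Z; move: Ht; rewrite Z (v0 Hval).
have [O1 Os1 P1v _] := pt (oner_neq0 K) (v1 Hval) (gle_refl Hord 0) (gltW Hord Hg).
have base : v (Pv 1 (s / 1)) = Some 0 by rewrite P1v ?mul0rn.
have nzab : v (a * b) <> None -> a != 0 /\ b != 0.
  move=> H; split; apply/eqP => Z; apply: H; by rewrite Z ?mul0r ?mulr0 (v0 Hval).
case: (trich (v (a * b)) (Some g)) => [H|[H|H]].
- case E: (v (a * b)) => [mu|]; last by rewrite E in H; exfalso; apply: H.
  have [nza nzb] : a != 0 /\ b != 0 by apply: nzab; rewrite E.
  case: (vnz Hval nza) => al Hal; case: (vnz Hval nzb) => be Hbe.
  have Emu : mu = al + be by move: E; rewrite (vM Hval) Hal Hbe => -[].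
  have Hal0 : le 0 al by move: Ha; rewrite /in_val_ring Hal.
  have Hbe0 : le 0 be by move: Hb; rewrite /in_val_ring Hbe.
  have Hlt : LT (al + be) g by rewrite E Emu in H; move/ltinf_SS: H.
  have Ve : v (a * b + - s) = Some (al + be).
    rewrite (ultra Hord Hval) ?E ?Emu // Hsneg; by apply/ltinf_SS.
  have V3 : v (c3 * (a * b + - s) ^+ n) = Some (tau + N (al + be)).
    by rewrite (vM Hval) Hc3 (vexp Hval n Ve).
  have VP : v (Pv a b) = Some (tau + N (al + be)).
    rewrite /Pv -V3; apply: three; rewrite V3.
      rewrite (vexp Hval n Hal); apply/ltinf_SS; exact: A1.
    rewrite (vM Hval) Hc2 (vexp Hval n Hbe) /=; apply/ltinf_SS; exact: A2.
  exists 1, (s / 1); split => //; rewrite VP base; apply/ltinf_SS; exact: A3.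
- have [nza nzb] : a != 0 /\ b != 0 by apply: nzab; rewrite H.
  case: (vnz Hval nza) => al Hal; case: (vnz Hval nzb) => be Hbe.
  have Hab : al + be = g by move: H; rewrite (vM Hval) Hal Hbe => -[].
  have Hbeg : be = g - al by rewrite -Hab [al + be]addrC addrK.
  have Hal0 : le 0 al by move: Ha; rewrite /in_val_ring Hal.
  have Hbe0 : le 0 be by move: Hb; rewrite /in_val_ring Hbe.
  have Halg : le al g by rewrite (gle_sub Hord) -Hbeg.
  have V1 : v (a ^+ n) = Some (N al) by exact: (vexp Hval n Hal).
  have V2 : v (c2 * b ^+ n) = Some (kap + N (g - al)).
    by rewrite (vM Hval) Hc2 (vexp Hval n Hbe) Hbeg.
  case: (trich (Some (N al)) (Some g)) => [H1|[H1|H1]].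
  + move/ltinf_SS: H1 => H1.
    have V12 : v (a ^+ n + c2 * b ^+ n) = Some (N al).
      rewrite (ultra Hord Hval) V1 // V2; apply/ltinf_SS; exact: P1.
    have Hm : Li (v (Pv a b)) (Some (N al)).
      rewrite /Pv -V12; apply: le_two; rewrite V12; apply: vt3ne => w; exact: C1.
    have [J1 J2 J3 J4] := I1 Hal0 H1.
    have nzt : a * t != 0 by apply: mulf_neq0.
    have Vat : v (a * t) = Some (al + d) by rewrite (vM Hval) Hal Ht.
    have [Q1 Q2 Q3 _] := pt nzt Vat J1 (gltW Hord J2).
    exists (a * t), (s / (a * t)); split => //; rewrite (Q3 J3).
    apply: (le_ltinf Hord Hm); by apply/ltinf_SS.
  + case: H1 => H1; case: (@Hnd al); rewrite H1 subrr; exact: (D0 HD).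
  + move/ltinf_SS: H1 => H1.
    have V12 : v (a ^+ n + c2 * b ^+ n) = Some (kap + N (g - al)).
      rewrite (ultra_r Hord Hval) V2 // V1; apply/ltinf_SS; exact: P2.
    have Hm : Li (v (Pv a b)) (Some (kap + N (g - al))).
      rewrite /Pv -V12; apply: le_two; rewrite V12; apply: vt3ne => w; exact: C2.
    have [J1 J2 J3 J4] := I2 H1.
    have nzt : a / t != 0 by apply: mulf_neq0 => //; rewrite invr_neq0.
    have Vat : v (a / t) = Some (al - d) by exact: (vdiv Hval tnz Ht Hal).
    have [Q1 Q2 _ Q4] := pt nzt Vat (gltW Hord J1) (gle_trans Hord J2 Halg).
    exists (a / t), (s / (a / t)); split => //; rewrite (Q4 J3).
    apply: (le_ltinf Hord Hm); by apply/ltinf_SS.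
- have Ve : v (a * b + - s) = Some g.
    by rewrite (ultra_r Hord Hval) // Hsneg.
  have V3 : v (c3 * (a * b + - s) ^+ n) = Some (- uu).
    by rewrite (vM Hval) Hc3 (vexp Hval n Ve) /= T1.
  have VP : v (Pv a b) = Some (- uu).
    rewrite /Pv -V3; apply: three; rewrite V3; [exact: ltU1 | exact: ltU2].
  exists 1, (s / 1); split => //; rewrite VP base; apply/ltinf_SS; exact: T2.
Qed.
End Ineq.


Fixpoint mpow (K : fieldType) (F : mpoly K 2) (k : nat) : mpoly K 2 :=
  match k with
  | 0 => @MConst K 2 1
  | k.+1 => MMul F (mpow F k)
  end.

Lemma meval_mpow (K : fieldType) (F : mpoly K 2) k a :
  meval (mpow F k) a = (meval F a) ^+ k.
Proof. by elim: k => [|k IH] /=; rewrite ?expr0 // exprS IH. Qed.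

Definition PP (K : fieldType) n (s c2 c3 : K) : mpoly K 2 :=
  MAdd (MAdd (mpow (MVar K ord0) n) (MMul (@MConst K 2 c2) (mpow (MVar K ord_max) n)))
       (MMul (@MConst K 2 c3) (mpow (MAdd (MMul (MVar K ord0) (MVar K ord_max)) (@MConst K 2 (- s))) n)).

Lemma meval_PP (K : fieldType) n (s c2 c3 : K) f :
  meval (PP n s c2 c3) f = Pv n s c2 c3 (f ord0) (f ord_max).
Proof. by rewrite /PP /= !meval_mpow. Qed.

Unset Implicit Arguments. Set Strict Implicit.

Theorem proposition3p5 (K : fieldType) (G : zmodType) (le : rel G)
    (v : K -> option G) :
  ordered_abgroup le -> valuation le v -> extremal le v ->
  forall D : G -> Prop, convex_subgroup le D -> (exists d, D d /\ d <> 0) ->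
  quotient_divisible D.
Proof.
move=> Hord Hval Hext D HD [d0 [Hd0 Hd0nz]] n g Hn1.
apply: NNPP => Hno.
have Hnd0 : forall h, ~ D (h *+ n - g) by move=> h Hh; apply: Hno; exists h.
have gnz : g <> 0.
  move=> E; apply: (Hnd0 0); rewrite E mul0rn subrr; exact: (D0 HD).
have n2 : (1 < n)%N.
  case: n Hn1 Hnd0 {Hno} => [|[|m]] // _ H; case: (H g); rewrite mulr1n subrr; exact: (D0 HD).
have [ga [Hga Hndga]] : exists ga, ~~ le ga 0 /\ forall h, ~ D (h *+ n - ga).
  case: (glt0_total Hord gnz) => H; first by exists g.
  exists (- g); split => // h Hh; apply: (Hnd0 (- h)).
  by rewrite mulNrn -opprD; apply: (DN HD); rewrite -[g]opprK.
have [d [Hdpos Hd]] : exists d, ~~ le d 0 /\ D d.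
  case: (glt0_total Hord Hd0nz) => H; first by exists d0.
  by exists (- d0); split => //; apply: (DN HD).
have [s Hs] := vsurj Hval ga.
have [c2 Hc2] := vsurj Hval (kap n ga).
have [c3 Hc3] := vsurj Hval (tau n ga).
have [t Ht] := vsurj Hval d.
have [f [Hf Hmax]] := Hext 2%N (erefl _) (PP n s c2 c3).
have [a' [b' [Ha' Hb' Hlt]]] :=
  no_max Hord HD n2 Hga Hndga Hdpos Hd Hval Hs Hc2 Hc3 Ht (Hf ord0) (Hf ord_max).
pose q := fun i : 'I_2 => if i == ord0 then a' else b'.
have Hq : forall i, in_val_ring le v (q i).
  by move=> i; rewrite /q; case: (i == ord0).
have := Hmax q Hq; rewrite !meval_PP /q /= => H.
exact: Hlt H.
Qed.
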